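(* There is a unique morphism of ns operads $\varphi:Dend\to RatFct$ with $\varphi(\succ)=\frac{1}{x_1}\in RatFct_2$ and $\varphi(\prec)=\frac{1}{x_2}\in RatFct_2$. On planar binary trees it is given recursively by $\varphi(\mathrm{Y})=1\in RatFct_1$ and, for $s\in PBT_{p+1}$, $t\in PBT_{q+1}$, $$\varphi(s\vee t)=\frac{\varphi(s)(x_1,\dots,x_p)}{x_1+\cdots+x_p}\cdot\frac{\varphi(t)(x_{p+2},\dots,x_{p+q+1})}{x_{p+2}+\cdots+x_{p+q+1}}\in RatFct_{p+q+1},$$ where the first factor is replaced by $1$ if $p=0$ and the second by $1$ if $q=0$. Moreover, $\varphi:Dend_n\to RatFct_n$ is injective for every $n$, so $Dend$ is isomorphic to a sub-ns-operad of $RatFct$.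
   Context: $\mathbb{K}$ is a field. $RatFct$ is the ns operad with $RatFct_n=\mathbb{K}(x_1,\dots,x_n)$, identity $1\in\mathbb{K}(x_1)$, and partial compositions $(P\circ_iQ)(x_1,\dots,x_{n+m-1})=P(x_1,\dots,x_{i-1},x_i+\cdots+x_{i+m-1},x_{i+m},\dots,x_{n+m-1})\,Q(x_i,\dots,x_{i+m-1})$. A dendriform algebra is a vector space with two binary operations $\prec,\succ$ such that $(a\prec b)\prec c=a\prec(b\prec c+b\succ c)$, $(a\succ b)\prec c=a\succ(b\prec c)$, $(a\prec b+a\succ b)\succ c=a\succ(b\succ c)$; $Dend$ is the ns operad they define (generated by $\prec,\succ$ with these relations). $PBT_{n+1}$ is the set of planar binary trees with $n+1$ leaves, $|$ the one-leaf tree, $\mathrm{Y}$ the two-leaf tree, and $s\vee t$ the grafting of $s$ and $t$ onto a new root. $Dend_n$ has basis $PBT_{n+1}$, where a tree is identified with an $n$-ary dendriform operation recursively: $\mathrm{Y}=\mathrm{id}$, and for $s\in PBT_{p+1}$, $t\in PBT_{q+1}$, $s\vee t$ is the operation $(a_1,\dots,a_{p+q+1})\mapsto (s(a_1,\dots,a_p)\succ a_{p+1})\prec t(a_{p+2},\dots,a_{p+q+1})$, with the convention that the factor ''$s(\dots)\succ$'' is omitted if $p=0$ and ''$\prec t(\dots)$'' is omitted if $q=0$ (i.e. $s\vee t=s\succ\mathrm{Y}\prec t$ in the free dendriform algebra on $\mathrm{Y}$). *)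

(* Defs.v *)
From HB Require Import structures.
From mathcomp Require Import all_boot all_order all_algebra.
From mathcomp Require Import generic_quotient fraction.
Set Implicit Arguments. Unset Strict Implicit. Unset Printing Implicit Defensive.
Import Order.TTheory GRing.Theory Num.Theory.
Local Open Scope ring_scope.
Local Open Scope quotient_scope.

Notation "x %:F" := (@FracField.tofrac _ x).

Section RatFct.
Variable K : fieldType.

(* Polynomials in n variables x_0, ..., x_{n-1} (0-based), built as iterated
   univariate polynomials: mpoly n.+1 = {poly mpoly n}, the outer variable
   being x_n. *)
Fixpoint mpoly (n : nat) : idomainType :=
  match n with
  | 0 => K
  | n'.+1 => ({poly mpoly n'} : idomainType)
  end.

Fixpoint mconst (n : nat) (a : K) : mpoly n :=
  match n return mpoly n with
  | 0 => a
  | n'.+1 => (mconst n' a)%:P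
  end.

(* The variable x_k (0-based) in mpoly n; equals 0 when k >= n. *)
Fixpoint mvar (n : nat) (k : nat) : mpoly n :=
  match n return mpoly n with
  | 0 => 0
  | n'.+1 => if k == n' then 'X else (mvar n' k)%:P
  end.

Fixpoint msubst (m : nat) (v : nat -> mpoly m) (n : nat) : mpoly n -> mpoly m :=
  match n return mpoly n -> mpoly m with
  | 0 => fun a => mconst m a
  | n'.+1 => fun p => (map_poly (@msubst m v n') p).[v n']
  end.

Definition RatFct (n : nat) := {fraction mpoly n}.

Definition rvar (n k : nat) : RatFct n := (mvar n k)%:F.
Definition rconst (n : nat) (a : K) : RatFct n := (mconst n a)%:F.

Definition fsubst (n m : nat) (v : nat -> mpoly m) (P : RatFct n) : RatFct m :=
  let r := repr P in (msubst v \n_r)%:F / (msubst v \d_r)%:F.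

Definition vsum (N a b : nat) : mpoly N := \sum_(a <= k < b) mvar N k.

(* Partial composition P o_i Q (i 0-based), with explicit target arity N;
   the genuine operad composition is pcomp below, with N = n + m - 1:
   (P o_i Q)(x) = P(x_0,..,x_{i-1}, x_i+..+x_{i+m-1}, x_{i+m},..) * Q(x_i,..,x_{i+m-1}). *)
Definition pcompN (N n m : nat) (P : RatFct n) (i : nat) (Q : RatFct m) : RatFct N :=
  fsubst (fun j => if (j < i)%N then mvar N j
                   else if j == i then vsum N i (i + m)%N
                   else mvar N (j + m - 1)%N) P
  * fsubst (fun j => mvar N (i + j)%N) Q.

Definition pcomp (n m : nat) (P : RatFct n) (i : 'I_n) (Q : RatFct m)
  : RatFct (n + m)%N.-1 := pcompN (n + m)%N.-1 P i Q.

(* The three dendriform relations for prec := l, succ := r in RatFct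
   (the data of an ns operad morphism Dend -> RatFct):
   (a<b)<c = a<(b<c) + a<(b>c);  (a>b)<c = a>(b<c);  (a<b)>c + (a>b)>c = a>(b>c). *)
Definition dend_relations (l r : RatFct 2) : Prop :=
  [/\ pcomp l (0 : 'I_2) l = pcomp l (1 : 'I_2) l + pcomp l (1 : 'I_2) r,
      pcomp l (0 : 'I_2) r = pcomp r (1 : 'I_2) l &
      pcomp r (0 : 'I_2) l + pcomp r (0 : 'I_2) r = pcomp r (1 : 'I_2) r].

End RatFct.

Inductive pbt : Type := Leaf | Node of pbt & pbt.

Fixpoint pbt_eqb (s t : pbt) : bool :=
  match s, t with
  | Leaf, Leaf => true
  | Node s1 s2, Node t1 t2 => pbt_eqb s1 t1 && pbt_eqb s2 t2
  | _, _ => false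
  end.

Lemma pbt_eqP : Equality.axiom pbt_eqb.
Proof.
elim=> [|s1 IH1 s2 IH2] [|t1 t2] /=; try by constructor.
by apply: (iffP andP) => [[/IH1 -> /IH2 ->]|[<- <-]]; split; [apply/IH1|apply/IH2].
Qed.

HB.instance Definition _ := hasDecEq.Build pbt pbt_eqP.

Fixpoint leaves (t : pbt) : nat :=
  match t with Leaf => 1 | Node s u => leaves s + leaves u end.

(* arity of the dendriform operation of a tree in PBT_{n+1} is n *)
Definition arity (t : pbt) : nat := (leaves t).-1.

Definition Ytree : pbt := Node Leaf Leaf.

Section TreeEval.
Variable K : fieldType.
Variables (l r : RatFct K 2). (* images of prec and succ *)

(* Image of the tree-operation in RatFct, following
   s \/ t = (s(..) > a_{p+1}) < t(..), computed with partial compositions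
   (result placed in RatFct N; meaningful for N = arity t). *)
Fixpoint tree_eval (N : nat) (t : pbt) {struct t} : RatFct K N :=
  match t with
  | Leaf => 1
  | Node s u =>
    match s, u with
    | Leaf, Leaf => 1
    | Leaf, _ => pcompN N l 1 (tree_eval (arity u) u)
    | _, Leaf => pcompN N r 0 (tree_eval (arity s) s)
    | _, _ =>
      pcompN N (pcompN (arity s).+2 (pcompN 3 l 0 r) 0 (tree_eval (arity s) s))
             (arity s).+1 (tree_eval (arity u) u)
    end
  end.
End TreeEval.

(* phi on trees: prec |-> 1/x_2, succ |-> 1/x_1 (1-based), i.e. variables 1 and 0 *)
Definition phi_prec (K : fieldType) : RatFct K 2 := (rvar K 2 1)^-1.
Definition phi_succ (K : fieldType) : RatFct K 2 := (rvar K 2 0)^-1.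

Definition phiN (K : fieldType) (N : nat) (t : pbt) : RatFct K N :=
  tree_eval (phi_prec K) (phi_succ K) N t.

Definition phi (K : fieldType) (t : pbt) : RatFct K (arity t) := phiN K (arity t) t.

Definition shiftR (K : fieldType) (N o k : nat) (P : RatFct K k) : RatFct K N :=
  fsubst (fun j => mvar K N (o + j)%N) P.

(* Main.v *)
Require Import Defs.
From HB Require Import structures.
From mathcomp Require Import all_boot all_order all_algebra.
From mathcomp Require Import generic_quotient fraction.
From mathcomp Require Import zify ring.
Import GRing.Theory.
Local Open Scope ring_scope.
Local Open Scope quotient_scope.
Set Implicit Arguments. Unset Strict Implicit. Unset Printing Implicit Defensive.

Section Frac.
Variable R : idomainType.
Lemma pi_frac_mul (y : {ratio R}) :
  FracField.mul (\pi_({fraction R}) y) (\d_y)%:F = (\n_y)%:F.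
Proof.
unlock tofrac; rewrite !piE; apply/eqmodP; rewrite /= FracField.equivfE.
by rewrite !numden_Ratio ?(oner_eq0, mulf_neq0, denom_ratioP) // !mulr1 mulrC.
Qed.
Lemma frac_repr (x : {fraction R}) :
  x = (\n_(repr x))%:F / (\d_(repr x))%:F.
Proof.
have dn : (\d_(repr x))%:F != 0 :> {fraction R} by rewrite tofrac_eq0 denom_ratioP.
have := pi_frac_mul (repr x); rewrite reprK => <-.
change (x = x * (\d_(repr x))%:F / (\d_(repr x))%:F).
by rewrite mulfK.
Qed.
End Frac.

Section GenHorner.
Variables (R S : comNzRingType) (f : R -> S).
Hypotheses (fB : {morph f : a b / a - b}) (f1 : f 1 = 1) (fM : {morph f : a b / a * b}).
Variable x : S.
Definition fr := f.
HB.instance Definition _ := GRing.isZmodMorphism.Build R S fr fB.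
HB.instance Definition _ := GRing.isMonoidMorphism.Build R S fr (conj f1 fM).
Lemma gen_hornerB : {morph (fun p => (map_poly f p).[x]) : a b / a - b}.
Proof. move=> a b /=; have -> : f = fr by []. by rewrite rmorphB hornerD hornerN. Qed.
Lemma gen_horner1 : (map_poly f 1).[x] = 1.
Proof. have -> : f = fr by []. by rewrite rmorph1 hornerC. Qed.
Lemma gen_hornerM : {morph (fun p => (map_poly f p).[x]) : a b / a * b}.
Proof. move=> a b /=; have -> : f = fr by []. by rewrite rmorphM hornerM. Qed.
End GenHorner.
Section FracGen.
Variable R : idomainType.
Lemma frac_eq (a b c d : R) : b != 0 -> d != 0 ->
  (a%:F / b%:F = c%:F / d%:F :> {fraction R}) <-> (a * d = c * b).
Proof.
move=> b0 d0; have bF : b%:F != 0 :> {fraction R} by rewrite tofrac_eq0.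
have dF : d%:F != 0 :> {fraction R} by rewrite tofrac_eq0.
split=> [E|E].
  apply/eqP; rewrite -tofrac_eq !tofracM; apply/eqP.
  by rewrite -(divfK bF a%:F) E mulrAC divfK.
apply: (mulIf bF); apply: (mulIf dF); rewrite divfK // mulrAC divfK //.
by rewrite -!tofracM E.
Qed.
End FracGen.
Arguments frac_eq {R a b c d}.
Section Subst.
Variable K : fieldType.
Local Notation mp := (mpoly K).

Lemma mconstD m a b : @mconst K m (a + b) = @mconst K m a + @mconst K m b.
Proof. by elim: m => //= m ->; rewrite polyCD. Qed.
Lemma mconstN m a : @mconst K m (- a) = - @mconst K m a.
Proof. by elim: m => //= m ->; rewrite polyCN. Qed.
Lemma mconstM m a b : @mconst K m (a * b) = @mconst K m a * @mconst K m b.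
Proof. by elim: m => //= m ->; rewrite polyCM. Qed.
Lemma mconst1 m : @mconst K m 1 = 1.
Proof. by elim: m => //= m ->. Qed.
Lemma mconst0 m : @mconst K m 0 = 0.
Proof. by elim: m => //= m ->. Qed.
Lemma mconst_eq0 m a : (@mconst K m a == 0) = (a == 0).
Proof. by elim: m => //= m <-; rewrite polyC_eq0. Qed.

Section M.
Variables (m : nat) (v : nat -> mp m).

Lemma msubst_morph n :
  [/\ {morph @msubst K m v n : a b / a - b},
      msubst v (1 : mp n) = 1 & {morph @msubst K m v n : a b / a * b}].
Proof.
elim: n => [|n [IB I1 IM]] /=.
  by split=> [a b|//|a b]; rewrite ?mconstD ?mconstN ?mconst1 ?mconstM.
split.
- exact: gen_hornerB.
- exact: gen_horner1.
- exact: gen_hornerM.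
Qed.

Lemma msubstB n : {morph @msubst K m v n : a b / a - b}.
Proof. by case: (msubst_morph n). Qed.
Lemma msubst1 n : msubst v (1 : mp n) = 1.
Proof. by case: (msubst_morph n). Qed.
Lemma msubstM n : {morph @msubst K m v n : a b / a * b}.
Proof. by case: (msubst_morph n). Qed.
Lemma msubst0 n : msubst v (0 : mp n) = 0.
Proof. by rewrite -(subrr 0) msubstB subrr. Qed.
Lemma msubstN n : {morph @msubst K m v n : a / - a}.
Proof. by move=> a; rewrite -sub0r msubstB msubst0 sub0r. Qed.
Lemma msubstD n : {morph @msubst K m v n : a b / a + b}.
Proof. by move=> a b; rewrite -{1}(opprK b) msubstB msubstN opprK. Qed.
Lemma msubst_sum n I (r : seq I) (P : pred I) (F : I -> mp n) :
  msubst v (\sum_(i <- r | P i) F i) = \sum_(i <- r | P i) msubst v (F i).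
Proof. exact: (big_morph _ (@msubstD n) (@msubst0 n)). Qed.
Lemma msubst_prod n I (r : seq I) (P : pred I) (F : I -> mp n) :
  msubst v (\prod_(i <- r | P i) F i) = \prod_(i <- r | P i) msubst v (F i).
Proof. exact: (big_morph _ (@msubstM n) (@msubst1 n)). Qed.

End M.
HB.instance Definition _ m v n := GRing.isZmodMorphism.Build (mp n) (mp m) (@msubst K m v n) (@msubstB m v n).
HB.instance Definition _ m v n := GRing.isMonoidMorphism.Build (mp n) (mp m) (@msubst K m v n) (conj (@msubst1 m v n) (@msubstM m v n)).
Section M2.
Variables (m : nat) (v : nat -> mp m).
Lemma msubst_const n a : msubst v (@mconst K n a) = @mconst K m a.
Proof. by elim: n => //= n IH; rewrite map_polyC hornerC; apply: IH. Qed.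

Lemma msubst_var n k : (k < n)%N -> msubst v (mvar K n k) = v k.
Proof.
elim: n => // n IH; rewrite ltnS leq_eqVlt => /orP[/eqP->|kn] /=.
  by rewrite eqxx map_polyX hornerX.
by rewrite (ltn_eqF kn) map_polyC hornerC; apply: IH.
Qed.

Lemma msubst_var_ge n k : (n <= k)%N -> msubst v (mvar K n k) = 0.
Proof.
elim: n => [|n IH] kn /=; first exact: mconst0.
by rewrite (gtn_eqF kn) map_polyC hornerC; apply: IH; apply: ltnW.
Qed.

Lemma msubst_ext n (w : nat -> mp m) : (forall k, (k < n)%N -> v k = w k) ->
  forall p : mp n, msubst v p = msubst w p.
Proof.
elim: n => [//|n IH] E p /=; rewrite E //.
by congr (_.[_]); apply: eq_map_poly => q; apply: IH => k kn; apply: E; apply: ltnW.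
Qed.
End M2.

Lemma msubst_rmorph (m m' : nat) (g : {rmorphism mp m -> mp m'}) (v : nat -> mp m) n
  (gc : forall a, g (@mconst K m a) = @mconst K m' a) (p : mp n) :
  g (msubst v p) = msubst (fun k => g (v k)) p.
Proof.
elim: n p => [|n IH] p /=; first exact: gc.
rewrite -horner_map -map_poly_comp; congr (_.[_]).
by apply: eq_map_poly => q /=; apply: IH.
Qed.

Lemma msubst_comp (m m' n : nat) (v : nat -> mp m) (w : nat -> mp m') (p : mp n) :
  msubst w (msubst v p) = msubst (fun k => msubst w (v k)) p.
Proof. exact: (@msubst_rmorph m m' (@msubst K m' w m) v n (@msubst_const m' w m) p). Qed.

Lemma msubst_id n (p : mp n) : msubst (mvar K n) p = p.
Proof.
elim: n p => [//|n IH] p /=; rewrite eqxx.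
have -> : map_poly (@msubst K n.+1 (mvar K n.+1) n) p = map_poly polyC p.
  apply: eq_map_poly => q.
  rewrite (@msubst_ext n.+1 _ n (fun k => (mvar K n k)%:P)); last first.
    by move=> k kn /=; rewrite (ltn_eqF kn).
  rewrite -(@msubst_rmorph n n.+1 (polyC : {rmorphism mp n -> {poly mp n}})) //.
  by rewrite IH.
exact: comp_polyXr.
Qed.




Definition subst_nz (m n : nat) (v : nat -> mp m) :=
  forall p : mp n, p != 0 -> msubst v p != 0.
Arguments subst_nz {m} n v.

Lemma subst_nz_inv m n (v : nat -> mp m) (w : nat -> mp n) :
  (forall k, (k < n)%N -> msubst w (v k) = mvar K n k) -> subst_nz n v.
Proof.
move=> E p; apply: contra => /eqP H.
have : msubst w (msubst v p) = p.
  by rewrite msubst_comp (@msubst_ext n _ n _ E) msubst_id.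
by rewrite H rmorph0 => <-.
Qed.

Lemma subst_nz_comp m m' n (v : nat -> mp m) (w : nat -> mp m') :
  subst_nz n v -> subst_nz m w -> subst_nz n (fun k => msubst w (v k)).
Proof. by move=> Hv Hw p /Hv /Hw; rewrite msubst_comp. Qed.

Lemma fsubst_frac m n (v : nat -> mp m) (a b : mp n) : subst_nz n v -> b != 0 ->
  fsubst v (a%:F / b%:F) = (msubst v a)%:F / (msubst v b)%:F.
Proof.
move=> nz b0; rewrite /fsubst.
set P := a%:F / b%:F.
have dr := denom_ratioP (repr P).
have : P = (\n_(repr P))%:F / (\d_(repr P))%:F by apply: frac_repr.
rewrite {1}/P => /(frac_eq b0 dr) E.
apply/frac_eq; try exact: nz.
by rewrite -!rmorphM E.
Qed.

Lemma fsubst_tofrac m n (v : nat -> mp m) (a : mp n) : subst_nz n v ->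
  fsubst v (a%:F) = (msubst v a)%:F.
Proof.
move=> nz; have := fsubst_frac a nz (oner_neq0 _).
by rewrite !tofrac1 !divr1 rmorph1 tofrac1 divr1.
Qed.

Lemma fracP n (P : RatFct K n) : exists a b, b != 0 /\ P = a%:F / b%:F.
Proof. by exists (\n_(repr P)), (\d_(repr P)); split; [apply: denom_ratioP|apply: frac_repr]. Qed.

Lemma fsubstM m n (v : nat -> mp m) (P Q : RatFct K n) : subst_nz n v ->
  fsubst v (P * Q) = fsubst v P * fsubst v Q.
Proof.
move=> nz; have [a [b [b0 ->]]] := fracP P; have [c [d [d0 ->]]] := fracP Q.
rewrite mulrACA -invfM -!tofracM !fsubst_frac ?mulf_neq0 //.
by rewrite !rmorphM mulrACA invfM.
Qed.

Lemma fsubstV m n (v : nat -> mp m) (P : RatFct K n) : subst_nz n v ->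
  fsubst v (P^-1) = (fsubst v P)^-1.
Proof.
move=> nz; have [a [b [b0 ->]]] := fracP P.
have [->|a0] := eqVneq a 0.
  by rewrite tofrac0 mul0r invr0 -(mul0r (1%:F)^-1) -tofrac0 fsubst_frac ?oner_neq0 // rmorph0 tofrac0 !mul0r invr0.
by rewrite invfM invrK mulrC !fsubst_frac // invfM invrK mulrC.
Qed.

Lemma fsubst_comp m m' n (v : nat -> mp m) (w : nat -> mp m') (P : RatFct K n) :
  subst_nz n v -> subst_nz m w ->
  fsubst w (fsubst v P) = fsubst (fun k => msubst w (v k)) P.
Proof.
move=> nv nw; have [a [b [b0 ->]]] := fracP P.
have nc := subst_nz_comp nv nw.
rewrite fsubst_frac // fsubst_frac ?nv // fsubst_frac //.
by rewrite !msubst_comp.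
Qed.

Lemma fsubst_ext m n (v w : nat -> mp m) (P : RatFct K n) :
  (forall k, (k < n)%N -> v k = w k) -> fsubst v P = fsubst w P.
Proof. by move=> E; rewrite /fsubst !(@msubst_ext m _ n _ E). Qed.

End Subst.

Section Concrete.
Variable K : fieldType.
Local Notation mp := (mpoly K).

Definition pv N i m : nat -> mp N := fun j =>
  if (j < i)%N then mvar K N j else if j == i then vsum K N i (i + m)
  else mvar K N (j + m - 1).
Definition sv N o : nat -> mp N := fun j => mvar K N (o + j).

Lemma pcompNE N n m (P : RatFct K n) i (Q : RatFct K m) :
  pcompN N P i Q = fsubst (pv N i m) P * fsubst (sv N i) Q.
Proof. by []. Qed.

Lemma msubst_vsum m N (w : nat -> mp m) a b : (b <= N)%N ->
  msubst w (vsum K N a b) = \sum_(a <= k < b) w k.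
Proof.
move=> bN; rewrite /vsum msubst_sum big_nat_cond [RHS]big_nat_cond.
by apply: eq_bigr => k /andP[/andP[_ kb] _]; rewrite msubst_var // (leq_trans kb).
Qed.

Lemma mvar_neq0 n k : (k < n)%N -> mvar K n k != 0.
Proof.
elim: n => // n IH; rewrite ltnS leq_eqVlt => /orP[/eqP->|kn] /=.
  by rewrite eqxx polyX_eq0.
by rewrite (ltn_eqF kn) polyC_eq0 IH.
Qed.

Lemma vsum_neq0 N a b : (a < b <= N)%N -> vsum K N a b != 0.
Proof.
case/andP=> ab bN; apply/negP => /eqP H.
have := msubst_vsum (fun k => if k == a then mvar K 1 0 else 0) a bN.
rewrite H rmorph0 big_ltn // eqxx big_nat_cond big1 ?addr0.
  by move=> E; move: (@mvar_neq0 1 0 isT); rewrite -E eqxx.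
by move=> k /andP[/andP[ak _] _]; rewrite gtn_eqF.
Qed.

Lemma nz_sv N o n : (o + n <= N)%N -> subst_nz n (sv N o).
Proof.
move=> onN; apply: (subst_nz_inv (w := fun k => if (o <= k)%N then mvar K n (k - o) else 0)).
move=> k kn; rewrite /sv msubst_var; last by apply: leq_trans onN; rewrite ltn_add2l.
by rewrite leq_addr addKn.
Qed.

Lemma nz_pv N i n m : (0 < m)%N -> (i < n)%N -> (n + m - 1 <= N)%N ->
  subst_nz n (pv N i m).
Proof.
move=> m0 ilt nmN.
pose w k := if (k < i)%N then mvar K n k else if k == i then mvar K n i
            else if (k < i + m)%N then 0 else mvar K n (k - m + 1).
apply: (subst_nz_inv (w := w)) => k kn; rewrite /pv.
have kN : (k < N)%N by lia.
case: ltnP => ki.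
  by rewrite msubst_var // /w ki.
case: eqVneq => [->|kni].
  rewrite msubst_vsum; last by lia.
  rewrite big_ltn; last by lia.
  rewrite /w ltnn eqxx big_nat_cond big1 ?addr0 //.
  move=> j /andP[/andP[ij jm] _].
  have -> : (j < i)%N = false by lia.
  have -> : (j == i) = false by lia.
  by rewrite jm.
have ik : (i < k)%N by lia.
rewrite msubst_var; last by lia.
rewrite /w.
have -> : (k + m - 1 < i)%N = false by lia.
have -> : ((k + m - 1)%N == i) = false by lia.
have -> : (k + m - 1 < i + m)%N = false by lia.
by congr mvar; lia.
Qed.
End Concrete.


Lemma dend_field (F : fieldType) (a b c : F) :
  a != 0 -> b != 0 -> c != 0 -> a + b != 0 -> b + c != 0 ->
  [/\ c^-1 / b = (b + c)^-1 / c + (b + c)^-1 / b, c^-1 / a = a^-1 / c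
    & (a + b)^-1 / b + (a + b)^-1 / a = a^-1 / b].
Proof.
move=> x0 x1 x2 x01 x12.
by split; field; rewrite ?x0 ?x1 ?x2 ?x01 ?x12.
Qed.

Lemma ac4 (F : comRingType) (a b c d : F) :
  a * b * c * d = c * b * (d * a).
Proof. by ring. Qed.

Lemma fsubst_inv_var (K : fieldType) m n (v : nat -> mpoly K m) k : subst_nz n v -> (k < n)%N ->
  fsubst v ((mvar K n k)%:F^-1) = (v k)%:F^-1.
Proof. by move=> nz kn; rewrite fsubstV // fsubst_tofrac // msubst_var. Qed.
Section Dend.
Variable K : fieldType.
Local Notation mp := (mpoly K).


Lemma dend_ok : dend_relations (phi_prec K) (phi_succ K).
Proof.
rewrite /dend_relations /Defs.pcomp /phi_prec /phi_succ /rvar !pcompNE.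
rewrite (_ : (2 + 2).-1 = 3)%N //.
have P0 : subst_nz 2 (pv K 3 0 2) by apply: nz_pv.
have P1 : subst_nz 2 (pv K 3 1 2) by apply: nz_pv.
have S0 : subst_nz 2 (sv K 3 0) by apply: nz_sv.
have S1 : subst_nz 2 (sv K 3 1) by apply: nz_sv.
rewrite !fsubst_inv_var //.
have -> : pv K 3 0 2 1 = mvar K 3 2 by [].
have -> : pv K 3 0 2 0 = vsum K 3 0 2 by [].
have -> : pv K 3 1 2 1 = vsum K 3 1 3 by [].
have -> : pv K 3 1 2 0 = mvar K 3 0 by [].
have -> : sv K 3 0 0 = mvar K 3 0 by [].
have -> : sv K 3 0 1 = mvar K 3 1 by [].
have -> : sv K 3 1 0 = mvar K 3 1 by [].
have -> : sv K 3 1 1 = mvar K 3 2 by [].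
have E01 : vsum K 3 0 2 = mvar K 3 0 + mvar K 3 1.
  by rewrite /vsum big_ltn // big_ltn // big_geq // addr0.
have E12 : vsum K 3 1 3 = mvar K 3 1 + mvar K 3 2.
  by rewrite /vsum big_ltn // big_ltn // big_geq // addr0.
have x01 : (mvar K 3 0)%:F + (mvar K 3 1)%:F != 0.
  by rewrite -tofracD tofrac_eq0 -E01 vsum_neq0.
have x12 : (mvar K 3 1)%:F + (mvar K 3 2)%:F != 0.
  by rewrite -tofracD tofrac_eq0 -E12 vsum_neq0.
have x0 : (mvar K 3 0)%:F != 0 by rewrite tofrac_eq0 mvar_neq0.
have x1 : (mvar K 3 1)%:F != 0 by rewrite tofrac_eq0 mvar_neq0.
have x2 : (mvar K 3 2)%:F != 0 by rewrite tofrac_eq0 mvar_neq0.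
rewrite E01 E12 !tofracD.
have H := dend_field x0 x1 x2 x01 x12. exact: H.
Qed.
End Dend.

Lemma leaves_gt0 t : (0 < leaves t)%N.
Proof. elim: t => //= s IH u _; lia. Qed.

Section Rec.
Variable K : fieldType.
Local Notation mp := (mpoly K).
Local Notation l := (phi_prec K).
Local Notation r := (phi_succ K).

Lemma phiN_LN N a b : phiN K N (Node Leaf (Node a b)) =
  pcompN N l 1 (phi K (Node a b)).
Proof. by []. Qed.
Lemma phiN_NL N a b : phiN K N (Node (Node a b) Leaf) =
  pcompN N r 0 (phi K (Node a b)).
Proof. by []. Qed.
Lemma phiN_NN N a b c d : phiN K N (Node (Node a b) (Node c d)) =
  pcompN N (pcompN (arity (Node a b)).+2 (pcompN 3 l 0 r) 0 (phi K (Node a b)))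
     (arity (Node a b)).+1 (phi K (Node c d)).
Proof. by []. Qed.

Lemma fsubst_l N v : subst_nz 2 v -> fsubst v l = (v 1%N)%:F^-1 :> RatFct K N.
Proof. by move=> nz; rewrite /phi_prec /rvar fsubst_inv_var. Qed.
Lemma fsubst_r N v : subst_nz 2 v -> fsubst v r = (v 0%N)%:F^-1 :> RatFct K N.
Proof. by move=> nz; rewrite /phi_succ /rvar fsubst_inv_var. Qed.
End Rec.

Section Rec2.
Variable K : fieldType.
Local Notation mp := (mpoly K).
Local Notation l := (phi_prec K).
Local Notation r := (phi_succ K).

Lemma pv_lt N i m j : (j < i)%N -> pv K N i m j = mvar K N j.
Proof. by rewrite /pv => ->. Qed.
Lemma pv_eq N i m : pv K N i m i = vsum K N i (i + m).
Proof. by rewrite /pv ltnn eqxx. Qed.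
Lemma pv_gt N i m j : (i < j)%N -> pv K N i m j = mvar K N (j + m - 1).
Proof. by move=> ij; rewrite /pv ltnNge (ltnW ij) /= gtn_eqF. Qed.

Lemma C1 : pcompN 3 l 0 r = (mvar K 3 2)%:F^-1 * (mvar K 3 0)%:F^-1.
Proof.
rewrite pcompNE fsubst_l; last exact: nz_pv.
rewrite fsubst_r; last exact: nz_sv.
by rewrite pv_gt.
Qed.

Lemma C2 p (P : RatFct K p) : (0 < p)%N ->
  pcompN p.+2 ((mvar K 3 2)%:F^-1 * (mvar K 3 0)%:F^-1) 0 P =
  (mvar K p.+2 p.+1)%:F^-1 * (vsum K p.+2 0 p)%:F^-1 * fsubst (sv K p.+2 0) P.
Proof.
move=> p0; have nz : subst_nz 3 (pv K p.+2 0 p) by apply: nz_pv => //; lia.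
rewrite pcompNE fsubstM // !fsubst_inv_var // pv_gt // pv_eq add0n.
Qed.

Lemma C3 N p q (P : RatFct K p) (Q : RatFct K q) : (0 < p)%N -> (0 < q)%N ->
  N = (p + q).+1 ->
  fsubst (pv K N p.+1 q) ((mvar K p.+2 p.+1)%:F^-1 * (vsum K p.+2 0 p)%:F^-1
     * fsubst (sv K p.+2 0) P) * fsubst (sv K N p.+1) Q =
  shiftR N 0 P / (vsum K N 0 p)%:F * (shiftR N p.+1 Q / (vsum K N p.+1 N)%:F).
Proof.
move=> p0 q0 EN.
have nz : subst_nz p.+2 (pv K N p.+1 q) by apply: nz_pv => //; lia.
have nzs : subst_nz p (sv K p.+2 0) by apply: nz_sv; lia.
rewrite [fsubst (pv K N p.+1 q) _]fsubstM // [fsubst (pv K N p.+1 q) (_ * _)]fsubstM //.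
rewrite fsubst_inv_var // pv_eq.
rewrite [fsubst (pv K N p.+1 q) (_^-1)]fsubstV // fsubst_tofrac // msubst_vsum; last by lia.
rewrite fsubst_comp //.
have -> : (p.+1 + q)%N = N by lia.
have -> : \sum_(0 <= k < p) pv K N p.+1 q k = vsum K N 0 p.
  rewrite /vsum big_nat_cond [RHS]big_nat_cond; apply: eq_bigr => k /andP[/andP[_ kp] _].
  by rewrite pv_lt //; lia.
rewrite (@fsubst_ext _ _ _ _ (sv K N 0)); last first.
  move=> k kp; rewrite /sv add0n msubst_var; last by lia.
  by rewrite pv_lt //; lia.
exact: ac4.
Qed.

Lemma phi_rec s t : phi K (Node s t) =
          (if s is Leaf then 1
           else shiftR (arity (Node s t)) 0 (phi K s)
                / (vsum K (arity (Node s t)) 0 (arity s))%:F)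
        * (if t is Leaf then 1
           else shiftR (arity (Node s t)) (arity s).+1 (phi K t)
                / (vsum K (arity (Node s t)) (arity s).+1 (arity (Node s t)))%:F).
Proof.
case: s => [|a b]; case: t => [|c d].
- by rewrite mul1r.
- rewrite mul1r /phi phiN_LN pcompNE fsubst_l; last first.
    apply: nz_pv => //; rewrite /arity /=; have := leaves_gt0 c; have := leaves_gt0 d; lia.
  rewrite pv_eq mulrC.
  have -> : (1 + arity (Node c d))%N = arity (Node Leaf (Node c d)).
    by rewrite /arity /=; have := leaves_gt0 c; lia.
  by [].
- rewrite mulr1 /phi phiN_NL pcompNE fsubst_r; last first.
    apply: nz_pv => //; rewrite /arity /=; have := leaves_gt0 a; have := leaves_gt0 b; lia.
  by rewrite pv_eq mulrC.
- rewrite /phi phiN_NN pcompNE C1 C2; last by rewrite /arity /=; have := leaves_gt0 a; have := leaves_gt0 b; lia.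
  apply: C3; rewrite /arity /=; have := leaves_gt0 a; have := leaves_gt0 b;
    have := leaves_gt0 c; have := leaves_gt0 d; lia.
Qed.
End Rec2.

Fixpoint lnode (k : nat) (t : pbt) : bool :=
  match t with
  | Leaf => false
  | Node s u => if (k < arity s)%N then lnode k s
                else if k == arity s then (s == Leaf) && (u == Leaf)
                else lnode (k - (arity s).+1) u
  end.

Fixpoint trem (k : nat) (t : pbt) : pbt :=
  match t with
  | Leaf => Leaf
  | Node s u => if (k < arity s)%N then Node (trem k s) u
                else if k == arity s then Leaf
                else Node s (trem (k - (arity s).+1) u)
  end.

Fixpoint tins (k : nat) (t : pbt) : pbt :=
  match t with
  | Leaf => Node Leaf Leaf
  | Node s u => if (k <= arity s)%N then Node (tins k s) u
                else Node s (tins (k - (arity s).+1) u)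
  end.

Lemma arityN s u : arity (Node s u) = (arity s + arity u).+1.
Proof. rewrite /arity /=; have := leaves_gt0 s; have := leaves_gt0 u; lia. Qed.

Lemma leavesE t : leaves t = (arity t).+1.
Proof. rewrite /arity; have := leaves_gt0 t; lia. Qed.

Lemma arity0 t : arity t = 0%N -> t = Leaf.
Proof. by case: t => // s u; rewrite arityN. Qed.

Lemma lnode_lt k t : lnode k t -> (k < arity t)%N.
Proof.
elim: t k => //= s IHs u IHu k; rewrite arityN.
case: ltnP => [kp _|pk]; first lia.
case: (eqVneq k (arity s)) => [->|kp]; first lia.
move/IHu; lia.
Qed.

Lemma lnode_rem k t : lnode k t -> arity (trem k t) = (arity t).-1.
Proof.
elim: t k => //= s IHs u IHu k; rewrite arityN.
case: ltnP => [kp H|pk] /=.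
  rewrite arityN (IHs _ H); have := lnode_lt H; lia.
case: eqP => [_|kp] /=; first by case/andP=> /eqP-> /eqP->.
move=> H; rewrite arityN (IHu _ H); have := lnode_lt H; lia.
Qed.

Lemma ins_rem k t : lnode k t -> tins k (trem k t) = t.
Proof.
elim: t k => //= s IHs u IHu k.
case: ltnP => [kp H|pk] /=.
  by rewrite lnode_rem // IHs //; have -> : (k <= (arity s).-1)%N by lia.
case: eqP => [_|kp] /=; first by case/andP=> /eqP-> /eqP->.
move=> H /=; have -> : (k <= arity s)%N = false by lia.
by rewrite IHu.
Qed.

Lemma lnode_exists t : (0 < arity t)%N -> exists2 k, (k < arity t)%N & lnode k t.
Proof.
elim: t => // s IHs u IHu _.
case: (posnP (arity s)) => [s0|sp].
  case: (posnP (arity u)) => [u0|up].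
    by exists 0%N; rewrite ?arityN //= s0 (arity0 s0) (arity0 u0).
  have [k ku Hk] := IHu up; exists (k + (arity s).+1)%N; first by rewrite arityN; lia.
  rewrite /= s0 /=; rewrite addnS addn0 /= (_ : k.+1 - 1 = k)%N //; lia.
have [k ks Hk] := IHs sp; exists k; first by rewrite arityN; lia.
by rewrite /= ks.
Qed.

Section DT.
Variable K : fieldType.
Local Notation mp := (mpoly K).

Fixpoint Dt (N o : nat) (t : pbt) : mp N :=
  match t with
  | Leaf => 1
  | Node s u =>
    (if s is Leaf then 1 else vsum K N o (o + arity s) * Dt N o s) *
    (if u is Leaf then 1 else
       vsum K N (o + arity s).+1 ((o + arity s).+1 + arity u) * Dt N (o + arity s).+1 u)
  end.
Definition Dc N o t : mp N := if t is Leaf then 1 else vsum K N o (o + arity t) * Dt N o t.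

Lemma DtN N o s u : Dt N o (Node s u) = Dc N o s * Dc N (o + arity s).+1 u.
Proof. by []. Qed.

Lemma DcN N o s u : Dc N o (Node s u) = vsum K N o (o + arity (Node s u)) * Dt N o (Node s u).
Proof. by []. Qed.

Lemma vsum_shift N a b c : vsum K N (a + c) (b + c) = \sum_(a <= k < b) mvar K N (k + c).
Proof. by rewrite /vsum big_addn addnK. Qed.

Lemma msubst_sv_vsum N M o a b : (b <= M)%N ->
  msubst (sv K N o) (vsum K M a b) = vsum K N (o + a) (o + b).
Proof.
move=> bM; rewrite msubst_vsum // [(o + a)%N]addnC [(o + b)%N]addnC vsum_shift.
by apply: eq_bigr => k _; rewrite /sv addnC.
Qed.

Lemma msubst_sv_Dt N M o t : forall o', (o' + arity t <= M)%N ->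
  msubst (sv K N o) (Dt M o' t) = Dt N (o + o') t /\
  msubst (sv K N o) (Dc M o' t) = Dc N (o + o') t.
Proof.
elim: t => [|s IHs u IHu] o' H; first by rewrite /Dc /= msubst1.
have E1 : msubst (sv K N o) (Dt M o' (Node s u)) = Dt N (o + o') (Node s u).
  rewrite !DtN msubstM.
  have [_ ->] := IHs o' ltac:(rewrite arityN in H; lia).
  have [_ ->] := IHu (o' + arity s).+1 ltac:(rewrite arityN in H; lia).
  by rewrite addnS addnA.
split=> //; rewrite !DcN msubstM E1 msubst_sv_vsum ?addnA //.
Qed.
End DT.

Section PhiD.
Variable K : fieldType.
Local Notation mp := (mpoly K).

Lemma shift_Dt N o t : (o + arity t <= N)%N ->
  shiftR N o ((Dt K (arity t) 0 t)%:F^-1) = (Dt K N o t)%:F^-1.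
Proof.
move=> H; rewrite /shiftR fsubstV; last exact: nz_sv.
rewrite fsubst_tofrac; last exact: nz_sv.
have [-> _] := @msubst_sv_Dt K N (arity t) o t 0 (leqnn _).
by rewrite addn0.
Qed.

Lemma phi_D t : phi K t = (Dt K (arity t) 0 t)%:F^-1.
Proof.
elim: t => [|s IHs u IHu]; first by rewrite /= invr1.
rewrite phi_rec DtN tofracM invfM.
have H := arityN s u.
congr (_ * _).
  case: s IHs H => [|a b] IHs H; first by rewrite /Dc tofrac1 invr1.
  rewrite IHs shift_Dt; last by rewrite H; lia.
  by rewrite DcN add0n tofracM invfM mulrC.
case: u IHu H => [|a b] IHu H; first by rewrite /Dc tofrac1 invr1.
rewrite IHu shift_Dt; last by rewrite H; lia.
rewrite DcN tofracM invfM mulrC add0n; congr (_ * _).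
by congr ((vsum _ _ _ _)%:F^-1); rewrite H.
Qed.
End PhiD.

Lemma lnodeN k s u : lnode k (Node s u) =
  if (k < arity s)%N then lnode k s
  else if k == arity s then (s == Leaf) && (u == Leaf)
  else lnode (k - (arity s).+1) u.
Proof. by []. Qed.
Lemma remN k s u : trem k (Node s u) =
  if (k < arity s)%N then Node (trem k s) u
  else if k == arity s then Leaf
  else Node s (trem (k - (arity s).+1) u).
Proof. by []. Qed.

Section Ev.
Variable K : fieldType.
Local Notation mp := (mpoly K).
Variables (n K0 : nat).
Hypothesis K0n : (K0 <= n)%N.

Definition ev : nat -> mp n := fun j =>
  if (j < K0)%N then mvar K n j else if j == K0 then 0 else mvar K n j.-1.

Lemma evL1 a c : (c <= K0)%N -> \sum_(a <= k < c) ev k = vsum K n a c.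
Proof.
move=> cK; rewrite /vsum big_nat_cond [RHS]big_nat_cond; apply: eq_bigr => k /andP[/andP[_ kc] _].
by rewrite /ev (leq_trans kc cK).
Qed.

Lemma evL2 c b : (K0 <= c)%N -> (c < b)%N -> \sum_(c.+1 <= k < b) ev k = vsum K n c b.-1.
Proof.
move=> Kc cb; rewrite big_add1.
rewrite /vsum big_nat_cond [RHS]big_nat_cond; apply: eq_bigr => k /andP[/andP[ck _] _].
rewrite /ev; have -> : (k.+1 < K0)%N = false by lia.
by have -> : (k.+1 == K0) = false by lia.
Qed.

Lemma ev_low a b : (b <= K0)%N -> msubst ev (vsum K n.+1 a b) = vsum K n a b.
Proof. by move=> bK; rewrite msubst_vsum ?evL1 //; lia. Qed.

Lemma ev_high a b : (K0 < a)%N -> (a <= b <= n.+1)%N ->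
  msubst ev (vsum K n.+1 a b) = vsum K n a.-1 b.-1.
Proof.
move=> Ka /andP[ab bn]; rewrite msubst_vsum //.
have [->|ab'] := eqVneq a b; first by rewrite /vsum !big_geq.
rewrite -(prednK (leq_ltn_trans (leq0n K0) Ka)) evL2 //; lia.
Qed.

Lemma ev_mid a b : (a <= K0 < b)%N -> (b <= n.+1)%N ->
  msubst ev (vsum K n.+1 a b) = vsum K n a b.-1.
Proof.
move=> /andP[aK Kb] bn; rewrite msubst_vsum // (@big_cat_nat _ _ _ K0) //; last exact: ltnW.
rewrite evL1 // big_ltn //.
have -> : ev K0 = 0 by rewrite /ev ltnn eqxx.
rewrite evL2 //.
change (vsum K n a K0 + (0 + vsum K n K0 b.-1) = vsum K n a b.-1).
rewrite add0r /vsum -(@big_cat_nat _ _ _ K0) //; lia.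
Qed.

Lemma ev_vsum_nz a b : (a < b <= n.+1)%N -> ~~ ((a == K0) && (b == K0.+1)) ->
  msubst ev (vsum K n.+1 a b) != 0.
Proof.
move=> /andP[ab bn] H.
case: (leqP b K0) => [bK|Kb].
  by rewrite ev_low // vsum_neq0 //; lia.
case: (ltnP K0 a) => [Ka|aK].
  by rewrite ev_high ?vsum_neq0 //; lia.
rewrite ev_mid ?vsum_neq0 //; first lia.
by rewrite aK.
Qed.

Lemma ev_Dt_low t : forall o, (o + arity t <= K0)%N ->
  msubst ev (Dt K n.+1 o t) = Dt K n o t /\ msubst ev (Dc K n.+1 o t) = Dc K n o t.
Proof.
elim: t => [|s IHs u IHu] o H; first by split; apply: msubst1.
have E1 : msubst ev (Dt K n.+1 o (Node s u)) = Dt K n o (Node s u).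
  rewrite !DtN msubstM.
  have [_ ->] := IHs o ltac:(rewrite arityN in H; lia).
  by have [_ ->] := IHu (o + arity s).+1 ltac:(rewrite arityN in H; lia).
by split=> //; rewrite !DcN msubstM E1 ev_low.
Qed.

Lemma ev_Dt_high t : forall o, (K0 < o)%N -> (o + arity t <= n.+1)%N ->
  msubst ev (Dt K n.+1 o t) = Dt K n o.-1 t /\ msubst ev (Dc K n.+1 o t) = Dc K n o.-1 t.
Proof.
elim: t => [|s IHs u IHu] o Ko H; first by split; apply: msubst1.
have E1 : msubst ev (Dt K n.+1 o (Node s u)) = Dt K n o.-1 (Node s u).
  rewrite !DtN msubstM.
  have [_ ->] := IHs o Ko ltac:(rewrite arityN in H; lia).
  have [_ ->] := IHu (o + arity s).+1 ltac:(lia) ltac:(rewrite arityN in H; lia).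
  by congr (_ * Dc _ _ _ _); lia.
split=> //; rewrite !DcN msubstM E1 ev_high //; last by lia.
by congr (vsum _ _ _ _ * _); lia.
Qed.
End Ev.

Section Ev2.
Variable K : fieldType.
Local Notation mp := (mpoly K).
Variables (n K0 : nat).
Hypothesis K0n : (K0 <= n)%N.
Local Notation ev := (ev K n K0).

Definition lnodeG o t := (o <= K0)%N && lnode (K0 - o) t.

Lemma lnodeG_split o s u : ~~ lnodeG o (Node s u) ->
  ~~ lnodeG o s /\ ~~ lnodeG (o + arity s).+1 u.
Proof.
move=> H; split; apply/negP => /andP[h1 h2]; move: H; rewrite /lnodeG lnodeN.
  have := lnode_lt h2 => h3.
  by rewrite h1 h3 h2.
have -> : (o <= K0)%N = true by lia.
have -> : (K0 - o < arity s)%N = false by lia.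
have -> : ((K0 - o)%N == arity s) = false by lia.
by rewrite (_ : (K0 - o - (arity s).+1 = K0 - (o + arity s).+1)%N) ?h2 //; lia.
Qed.

Lemma ev_nz t : forall o, ~~ lnodeG o t -> (o + arity t <= n.+1)%N ->
  msubst ev (Dt K n.+1 o t) != 0 /\ msubst ev (Dc K n.+1 o t) != 0.
Proof.
elim: t => [|s IHs u IHu] o H B.
  by split; rewrite msubst1 oner_neq0.
have [Hs Hu] := lnodeG_split H.
have A := arityN s u.
have [_ ns] := IHs o Hs ltac:(lia).
have [_ nu] := IHu _ Hu ltac:(lia).
have nt : msubst ev (Dt K n.+1 o (Node s u)) != 0.
  by rewrite DtN msubstM mulf_neq0.
split=> //; rewrite DcN msubstM mulf_neq0 // ev_vsum_nz //; first lia.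
apply/negP => /andP[/eqP oK /eqP aK].
have s0 : arity s = 0%N by lia.
have u0 : arity u = 0%N by lia.
move: H; rewrite (arity0 s0) (arity0 u0) /lnodeG oK leqnn subnn.
by [].
Qed.

Lemma Dc_from_Dt o t : lnodeG o t -> (o + arity t <= n.+1)%N -> t != Ytree ->
  (exists E, Dt K n.+1 o t = mvar K n.+1 K0 * E /\ msubst ev E = Dt K n o (trem (K0 - o) t)) ->
  exists E, Dc K n.+1 o t = mvar K n.+1 K0 * E /\ msubst ev E = Dc K n o (trem (K0 - o) t).
Proof.
case: t => [|s u]; first by rewrite /lnodeG andbF.
move=> /andP[oK Hk] B nY [E [HE HEv]].
have lt := lnode_lt Hk.
have ar := lnode_rem Hk.
have a2 : (2 <= arity (Node s u))%N.
  case: (ltnP 1 (arity (Node s u))) => // a1.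
  move: nY; rewrite arityN in a1.
  have s0 : arity s = 0%N by lia.
  have u0 : arity u = 0%N by lia.
  by rewrite (arity0 s0) (arity0 u0).
exists (vsum K n.+1 o (o + arity (Node s u)) * E); split.
  by rewrite DcN HE mulrCA.
rewrite msubstM HEv ev_mid //; last by lia.
  case E2 : (trem (K0 - o) (Node s u)) ar => [|s' u'] ar.
    by move: ar; rewrite (_ : arity Leaf = 0%N) //; lia.
  by rewrite DcN ar; congr (vsum _ _ _ _ * _); lia.
Qed.

Lemma ev_fac t : forall o, lnodeG o t -> (o + arity t <= n.+1)%N ->
  (t != Ytree -> exists E, Dt K n.+1 o t = mvar K n.+1 K0 * E /\
                   msubst ev E = Dt K n o (trem (K0 - o) t)) /\
  (exists E, Dc K n.+1 o t = mvar K n.+1 K0 * E /\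
                   msubst ev E = Dc K n o (trem (K0 - o) t)).
Proof.
elim: t => [|s IHs u IHu] o H B.
  by move: H; rewrite /lnodeG andbF.
have A := arityN s u.
move: (H); rewrite /lnodeG lnodeN => /andP[oK].
case: ltnP => [kp Hk|pk].
  have [_ [Es [HE HEv]]] := IHs o ltac:(by rewrite /lnodeG oK Hk) ltac:(lia).
  have Dtp : exists E, Dt K n.+1 o (Node s u) = mvar K n.+1 K0 * E /\
                   msubst ev E = Dt K n o (trem (K0 - o) (Node s u)).
    exists (Es * Dc K n.+1 (o + arity s).+1 u); split.
      by rewrite DtN HE mulrA.
    rewrite msubstM HEv remN kp DtN lnode_rem //.
    have [_ ->] := @ev_Dt_high K n K0 K0n u (o + arity s).+1 ltac:(lia) ltac:(lia).
    by congr (_ * Dc _ _ _ _); lia.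
  have nY : Node s u != Ytree.
    by apply/negP => /eqP [s0 _]; move: kp; rewrite s0.
  by split; [move=> _; exact: Dtp | exact: (Dc_from_Dt H B nY Dtp)].
case: eqP => [kp|kp].
  case/andP => /eqP s0 /eqP u0; subst s u.
  have K0o : K0 = o by move: kp; rewrite /arity /=; lia.
  rewrite -K0o subnn; split=> [/eqP //|].
  exists 1; split; last by rewrite msubst1.
  rewrite mulr1 DcN /vsum (_ : (K0 + arity Ytree = K0.+1)%N) ?big_nat1; last by rewrite (_ : arity Ytree = 1%N) // addn1.
  by rewrite (_ : Dt K n.+1 K0 (Node Leaf Leaf) = 1) ?mulr1 // DtN /= mulr1.
move=> Hk.
have Hu : lnodeG (o + arity s).+1 u.
  rewrite /lnodeG (_ : (K0 - (o + arity s).+1 = K0 - o - (arity s).+1)%N) ?Hk ?andbT; lia.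
have [_ [Eu [HE HEv]]] := IHu _ Hu ltac:(lia).
have nY : Node s u != Ytree.
  apply/negP => /eqP [_ u0]; move: Hk; rewrite u0 /=; by [].
have Dtp : exists E, Dt K n.+1 o (Node s u) = mvar K n.+1 K0 * E /\
                 msubst ev E = Dt K n o (trem (K0 - o) (Node s u)).
  exists (Dc K n.+1 o s * Eu); split.
    by rewrite DtN HE mulrCA.
  rewrite msubstM HEv remN.
  have -> : (K0 - o < arity s)%N = false by lia.
  have -> : ((K0 - o)%N == arity s) = false by apply/eqP.
  rewrite DtN.
  have [_ ->] := @ev_Dt_low K n K0 K0n s o ltac:(lia).
  by congr (_ * Dc _ _ _ (trem _ _)); lia.
by split; [move=> _; exact: Dtp | exact: (Dc_from_Dt H B nY Dtp)].
Qed.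
End Ev2.

Lemma gen_add (F : fieldType) (a b c d : F) : b != 0 -> d != 0 ->
  a / b + c / d = (a * d + c * b) / (b * d).
Proof. by move=> b0 d0; field; rewrite b0 d0. Qed.

Section FracOps.
Variable R : idomainType.
Lemma frac_add (a b c d : R) : b != 0 -> d != 0 ->
  a%:F / b%:F + c%:F / d%:F = (a * d + c * b)%:F / (b * d)%:F :> {fraction R}.
Proof.
move=> b0 d0; have bF : b%:F != 0 :> {fraction R} by rewrite tofrac_eq0.
have dF : d%:F != 0 :> {fraction R} by rewrite tofrac_eq0.
rewrite tofracD !tofracM.
exact: (@gen_add {fraction R} a%:F b%:F c%:F d%:F bF dF).
Qed.
Lemma frac_mul (a b c d : R) :
  a%:F / b%:F * (c%:F / d%:F) = (a * c)%:F / (b * d)%:F :> {fraction R}.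
Proof. by rewrite !tofracM invfM mulrACA. Qed.
End FracOps.

Section Evr.
Variable K : fieldType.
Local Notation mp := (mpoly K).
Variables (n K0 : nat).
Local Notation ev := (ev K n K0).

Definition Evr (P : RatFct K n.+1) (Q : RatFct K n) :=
  exists a b : mp n.+1, msubst ev b != 0 /\ P = a%:F / b%:F /\
     Q = (msubst ev a)%:F / (msubst ev b)%:F.

Lemma Evr_nz (b : mp n.+1) : msubst ev b != 0 -> b != 0.
Proof. by apply: contra => /eqP ->; rewrite rmorph0. Qed.

Lemma Evr0 : Evr 0 0.
Proof.
exists 0, 1; split; first by rewrite msubst1 oner_neq0.
by rewrite msubst0 !tofrac0 !mul0r.
Qed.

Lemma Evr_add P Q P' Q' : Evr P Q -> Evr P' Q' -> Evr (P + P') (Q + Q').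
Proof.
move=> [a [b [hb [-> ->]]]] [c [d [hd [-> ->]]]].
exists (a * d + c * b), (b * d); split; first by rewrite msubstM mulf_neq0.
split; first by rewrite frac_add // Evr_nz.
by rewrite frac_add // msubstD !msubstM.
Qed.

Lemma Evr_fun P Q Q' : Evr P Q -> Evr P Q' -> Q = Q'.
Proof.
move=> [a [b [hb [-> ->]]]] [c [d [hd [E ->]]]].
move/(frac_eq (Evr_nz hb) (Evr_nz hd)): E => E.
by apply/(frac_eq hb hd); rewrite -!msubstM E.
Qed.

Lemma Evr_sum (I : eqType) (r : seq I) (F : I -> RatFct K n.+1) (G : I -> RatFct K n) :
  (forall i, i \in r -> Evr (F i) (G i)) ->
  Evr (\sum_(i <- r) F i) (\sum_(i <- r) G i).
Proof.
elim: r => [|i r IH] H; first by rewrite !big_nil; exact: Evr0.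
rewrite !big_cons; apply: Evr_add; first by apply: H; rewrite mem_head.
by apply: IH => j jr; apply: H; rewrite in_cons jr orbT.
Qed.
End Evr.

Section Main.
Variable K : fieldType.
Local Notation mp := (mpoly K).

Lemma Dt_neq0 N t : forall o, (o + arity t <= N)%N -> Dt K N o t != 0 /\ Dc K N o t != 0.
Proof.
elim: t => [|s IHs u IHu] o H; first by split; rewrite oner_neq0.
have A := arityN s u.
have [_ h1] := IHs o ltac:(lia).
have [_ h2] := IHu (o + arity s).+1 ltac:(lia).
have h : Dt K N o (Node s u) != 0 by rewrite DtN mulf_neq0.
by split=> //; rewrite DcN mulf_neq0 // vsum_neq0 //; lia.
Qed.

Lemma phiN_D n t : arity t = n -> phiN K n t = (Dt K n 0 t)%:F^-1.
Proof. by move=> <-; exact: phi_D. Qed.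

Lemma uniq_single (T : eqType) (ts : seq T) (x : T) :
  uniq ts -> (forall t, t \in ts -> t = x) -> x \in ts -> ts = [:: x].
Proof.
case: ts => [//|y ts] /= /andP[yn U] H _.
have -> := H y (mem_head _ _); congr cons.
case: ts H yn U => [//|z ts] H yn _.
have ez : z = x by apply: H; rewrite !in_cons eqxx orbT.
have ey : y = x by apply: H; rewrite mem_head.
by move: yn; rewrite ey -ez mem_head.
Qed.

Definition Pinj n := forall (ts : seq pbt) (c : pbt -> K),
  uniq ts -> all (fun t => leaves t == n.+1)%N ts ->
  \sum_(t <- ts) rconst n (c t) * phiN K n t = 0 -> forall t, t \in ts -> c t = 0.

Lemma base_case n T0 : phiN K n T0 = 1 ->
  (forall t, leaves t = n.+1 -> t = T0) -> Pinj n.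
Proof.
move=> P1 HT ts c U A S t0 t0in.
have Hall : forall t, t \in ts -> t = T0.
  by move=> t tin; apply: HT; apply/eqP; exact: (allP A t tin).
have E0 := Hall t0 t0in; subst t0.
move: S; rewrite (uniq_single U Hall t0in) big_seq1 P1 mulr1 /rconst.
by move/eqP; rewrite tofrac_eq0 mconst_eq0 => /eqP.
Qed.
End Main.

Section Step.
Variable K : fieldType.
Local Notation mp := (mpoly K).

Lemma step n : Pinj K n.+1 -> Pinj K n.+2.
Proof.
move=> IH ts c U A S t0 t0in.
have ar : forall t, t \in ts -> arity t = n.+2.
  by move=> t tin; have := eqP (allP A t tin); rewrite leavesE => [[]].
have [k kt Hk] := lnode_exists (t := t0) ltac:(by rewrite ar).
rewrite ar // in kt.
have K0n : (k <= n.+1)%N by lia.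
set x := mvar K n.+2 k.
have EV : @Evr K n.+1 k
   (\sum_(t <- ts) (x%:F * (rconst n.+2 (c t) * phiN K n.+2 t)))
   (\sum_(t <- ts) (if lnode k t then rconst n.+1 (c t) * phiN K n.+1 (trem k t) else 0)).
  apply: Evr_sum => t tin.
  have at2 := ar t tin.
  rewrite phiN_D // /rconst.
  case: (boolP (lnode k t)) => Hl.
    have LG : lnodeG k 0 t by rewrite /lnodeG subn0 Hl.
    have nY : t != Ytree by apply/negP => /eqP Et; move: at2; rewrite Et.
    have [HD _] := ev_fac K K0n LG ltac:(lia).
    have [E [HE HEv]] := HD nY.
    rewrite subn0 in HEv.
    have ar' : arity (trem k t) = n.+1 by rewrite lnode_rem // at2.
    exists (mconst n.+2 (c t)), E; split.
      by rewrite HEv; have [] := @Dt_neq0 K n.+1 (trem k t) 0 ltac:(lia).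
    split.
      have x0 : x%:F != 0 by rewrite tofrac_eq0 mvar_neq0.
      by rewrite HE tofracM invfM /x mulrCA mulVKf.
    by rewrite msubst_const HEv phiN_D.
  have LG : ~~ lnodeG k 0 t by rewrite /lnodeG subn0 Hl.
  have [nz _] := ev_nz K K0n LG ltac:(lia).
  exists (x * mconst n.+2 (c t)), (Dt K n.+2 0 t); split => //.
  split; first by rewrite tofracM mulrA.
  rewrite msubstM /x msubst_var // /ev ltnn eqxx.
  by rewrite mul0r tofrac0 mul0r.
have Z : \sum_(t <- ts) (if lnode k t then rconst n.+1 (c t) * phiN K n.+1 (trem k t) else 0) = 0.
  apply: (Evr_fun EV); rewrite -big_distrr /= S mulr0; exact: Evr0.
rewrite -big_mkcond /= -big_filter in Z.
set fl := filter (lnode k) ts in Z.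
have fl_in : forall t, t \in fl -> lnode k t /\ t \in ts.
  by move=> t; rewrite mem_filter => /andP[].
have Z' : \sum_(t' <- map (trem k) fl) rconst n.+1 (c (tins k t')) * phiN K n.+1 t' = 0.
  rewrite big_map; apply: etrans Z; apply: eq_big_seq => t tin.
  by have [Hl _] := fl_in t tin; rewrite ins_rem.
have U' : uniq (map (trem k) fl).
  rewrite map_inj_in_uniq ?filter_uniq // => t1 t2 t1in t2in E.
  have [H1 _] := fl_in t1 t1in; have [H2 _] := fl_in t2 t2in.
  by rewrite -(ins_rem H1) E ins_rem.
have A' : all (fun t => leaves t == n.+2)%N (map (trem k) fl).
  apply/allP => t' /mapP [t tin ->].
  have [Hl tin'] := fl_in t tin.
  by rewrite leavesE lnode_rem // ar.
have := IH _ (fun t' => c (tins k t')) U' A' Z' (trem k t0).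
rewrite ins_rem //; apply; apply: map_f.
by rewrite mem_filter Hk.
Qed.
End Step.

Lemma inj_all (K : fieldType) n : Pinj K n.
Proof.
elim: n => [|n IH].
  apply: (base_case (T0 := Leaf)) => // t; rewrite leavesE => [[]].
  exact: arity0.
case: n IH => [|n] IH; last exact: step.
apply: (base_case (T0 := Ytree)) => // t; rewrite leavesE => [[]].
case: t => [//|s u]; rewrite arityN => [[]] H.
have s0 : arity s = 0%N by lia.
have u0 : arity u = 0%N by lia.
by rewrite (arity0 s0) (arity0 u0).
Qed.

Theorem proposition3p3 (K : fieldType) :
  (* phi(prec) = 1/x_2, phi(succ) = 1/x_1 define an ns operad morphism Dend -> RatFct *)
  dend_relations (phi_prec K) (phi_succ K)
  (* phi(Y) = 1 *)
  /\ phi K Ytree = 1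
  (* recursive formula on s \/ t, s in PBT_{p+1}, t in PBT_{q+1} *)
  /\ (forall s t : pbt,
        phi K (Node s t) =
          (if s is Leaf then 1
           else shiftR (arity (Node s t)) 0 (phi K s)
                / (vsum K (arity (Node s t)) 0 (arity s))%:F)
        * (if t is Leaf then 1
           else shiftR (arity (Node s t)) (arity s).+1 (phi K t)
                / (vsum K (arity (Node s t)) (arity s).+1 (arity (Node s t)))%:F))
  (* injectivity of phi : Dend_n -> RatFct_n, Dend_n having basis PBT_{n+1} *)
  /\ (forall (n : nat) (ts : seq pbt) (c : pbt -> K),
        uniq ts -> all (fun t => leaves t == n.+1)%N ts ->
        \sum_(t <- ts) rconst n (c t) * phiN K n t = 0 ->
        forall t, t \in ts -> c t = 0).
Proof.
split; first exact: dend_ok.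
split; first by [].
split; first exact: phi_rec.
move=> n; exact: inj_all.
Qed.
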